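(* For each prime $p$, the function $n\mapsto\mathrm{ord}_p(\overline{F}_n)$ takes both positive and negative values. More precisely: (1) For every prime $p$, $\mathrm{ord}_p(\overline{F}_p)=p-1>0$. (2) $\mathrm{ord}_2(\overline{F}_7)=-1$. For every odd prime $p$, $\mathrm{ord}_p(\overline{F}_{3p-1})=-\frac{p-1}{2}$, and more generally $\mathrm{ord}_p(\overline{F}_n)<0$ for all integers $n$ with $\frac{8}{3}p\le n\le 3p-1$.
   Context: For a positive integer $n$, $\overline{F}_n=\Big(\prod_{1\le h\le k\le n,\ \gcd(h,k)=1}\frac{h}{k}\Big)^{-1}$ is the reciprocal of the product of all nonzero Farey fractions of order $n$. For a nonzero rational $x$, $\mathrm{ord}_p(x)$ is the exponent of the prime $p$ in $x$ (possibly negative). *)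

(* Defs.v *)
From mathcomp Require Import all_boot all_order all_algebra.
Set Implicit Arguments. Unset Strict Implicit. Unset Printing Implicit Defensive.
Import Order.TTheory GRing.Theory Num.Theory.
Local Open Scope ring_scope.

Definition Fbar (n : nat) : rat :=
  (\prod_(k < n.+1) \prod_(h < n.+1 | (0 < h)%N && (h <= k)%N && coprime h k)
      ((h%:R : rat) / (k%:R : rat)))^-1.

Definition ordp (p : nat) (x : rat) : int :=
  (logn p `|numq x|%N)%:Z - (logn p `|denq x|%N)%:Z.

(* Main.v *)
Require Import Defs.
From mathcomp Require Import all_boot all_order all_algebra.
From mathcomp Require Import zify ring.
Import Order.TTheory GRing.Theory Num.Theory.
Local Open Scope ring_scope.

Local Open Scope nat_scope.
Lemma sum_ind (P : pred nat) a n :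
  \sum_(0 <= h < n) ((P h && (h == a)) : nat) = ((a < n) && P a).
Proof.
elim: n => [|n IH]; first by rewrite big_geq.
rewrite big_nat_recr //= IH.
case: (ltngtP a n) => [an|na|<-].
- have e2 : (a < n.+1) = true by apply/idP; lia.
  by rewrite e2 andbF addn0.
- have e2 : (a < n.+1) = false by apply/negbTE; lia.
  by rewrite e2 andbF.
- by rewrite ltnSn andbT.
Qed.

Lemma dvd_small p k : prime p -> k < 3 * p ->
  p %| k = [|| k == 0, k == p | k == 2 * p].
Proof.
move=> pp k3.
have p0 := prime_gt0 pp.
apply/idP/idP.
- case/dvdnP=> m km.
  have : m < 3 by rewrite -(ltn_pmul2r p0) -km.
  rewrite km; clear km.
  by case: m => [|[|[|m]]] H; rewrite ?mul0n ?mul1n ?eqxx ?orbT //; lia.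
- by case/or3P=> /eqP ->; rewrite ?dvdn0 ?dvdnn ?dvdn_mull.
Qed.

Lemma logn_small p k : prime p -> odd p -> k < 3 * p ->
  logn p k = (k == p) + (k == 2 * p).
Proof.
move=> pp op k3.
have p0 := prime_gt0 pp.
have p2 : p != 2 by apply: contraTneq op => ->.
case: (boolP (p %| k)) => [pk|npk].
- move: pk; rewrite dvd_small // => /or3P[] /eqP ->.
  + rewrite logn0; have -> : (0 == p) = false by apply/eqP; lia.
    by have -> : (0 == 2 * p) = false by apply/eqP; lia.
  + rewrite logn_prime // eqxx; have -> : (p == 2 * p) = false by apply/eqP; lia.
    by [].
  + rewrite lognM // !logn_prime // eqxx (negbTE p2) /= eqxx.
    by have -> : (2 * p == p) = false by apply/eqP; lia.
- rewrite logn_coprime ?prime_coprime //.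
  have -> : (k == p) = false by apply: contraNF npk => /eqP ->.
  by have -> : (k == 2 * p) = false by apply: contraNF npk => /eqP ->; rewrite dvdn_mull.
Qed.

Lemma logn_small1 p k : prime p -> k < 2 * p ->
  logn p k = (k == p).
Proof.
move=> pp k2.
have p0 := prime_gt0 pp.
case: (boolP (p %| k)) => [pk|npk].
- move: pk; rewrite dvd_small; last by lia. 2: by [].
  case/or3P=> /eqP kE.
  + by rewrite kE logn0; have -> : (0 == p) = false by apply/eqP; lia.
  + by rewrite kE logn_prime // eqxx.
  + lia.
- rewrite logn_coprime ?prime_coprime //.
  by have -> : (k == p) = false by apply: contraNF npk => /eqP ->.
Qed.

Lemma cnt k : 1 < k ->
  \sum_(0 <= h < k.+1) (((0 < h) && coprime h k) : nat) = totient k.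
Proof.
move=> k1.
rewrite big_nat_recr //= /coprime gcdnn.
have -> : (k == 1) = false by apply/eqP; lia.
rewrite andbF addn0 totient_count_coprime; apply: eq_big_nat => h /andP[_ hk].
case: h hk => [|h] hk /=; first by rewrite /coprime gcdn0; have -> : (k == 1) = false by apply/eqP; lia.
by rewrite /coprime gcdnC.
Qed.

Lemma tot2p p : prime p -> odd p -> totient (2 * p) = p.-1.
Proof.
move=> pp op; rewrite totient_coprime ?coprime2n // !totient_prime //.
by rewrite mul1n.
Qed.
Local Open Scope ring_scope.
Lemma ordp_div p (a b : nat) : (0<a)%N -> (0<b)%N ->
  ordp p (a%:R / b%:R) = (logn p a)%:Z - (logn p b)%:Z.
Proof.
move=> a0 b0; set x := _ / _.
have bR : (b%:R : rat) != 0 by rewrite pnatr_eq0 -lt0n.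
have aR : (a%:R : rat) != 0 by rewrite pnatr_eq0 -lt0n.
have e : numq x * b%:Z = a%:Z * denq x.
  apply: (@intr_inj rat); rewrite !intrM numqE /x !pmulrn; field; exact: bR.
have e2 : (`|numq x| * b = a * `|denq x|)%N.
  by rewrite -[b]/(`|b%:Z|%N) -[a in RHS]/(`|a%:Z|%N) -!abszM e.
have x0 : x != 0 by rewrite /x mulf_neq0 // invr_eq0.
have n0 : (0 < `|numq x|)%N by rewrite absz_gt0 numq_eq0.
have d0 : (0 < `|denq x|)%N by rewrite absz_gt0 gt_eqF // denq_gt0.
have := congr1 (logn p) e2; rewrite !lognM // /ordp; lia.
Qed.
Lemma logn_prod p (I : Type) (r : seq I) (P : pred I) (F : I -> nat) :
  (forall i, P i -> 0 < F i)%N ->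
  (0 < \prod_(i <- r | P i) F i)%N /\
  logn p (\prod_(i <- r | P i) F i) = (\sum_(i <- r | P i) logn p (F i))%N.
Proof.
move=> FP.
suff: (0 < \prod_(i <- r | P i) F i)%N && (logn p (\prod_(i <- r | P i) F i) == \sum_(i <- r | P i) logn p (F i))%N.
  by case/andP=> -> /eqP.
apply: (big_ind2 (fun x y => (0 < x)%N && (logn p x == y))).
- by rewrite logn1.
- move=> x1 x2 y1 y2 /andP[x10 /eqP <-] /andP[y10 /eqP <-].
  by rewrite muln_gt0 x10 y10 /= lognM.
- by move=> i Pi; rewrite FP // eqxx.
Qed.

Definition A p k : int :=
  (\sum_(0 <= h < k.+1 | (0 < h)%N && coprime h k) logn p k)%:Z -
  (\sum_(0 <= h < k.+1 | (0 < h)%N && coprime h k) logn p h)%:Z.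

Lemma narrow n (k : 'I_n.+1) (f : nat -> nat) :
  (\sum_(h < n.+1 | (0 < h)%N && (h <= k)%N && coprime h k) f h =
   \sum_(0 <= h < k.+1 | (0 < h)%N && coprime h k) f h)%N.
Proof.
rewrite big_mkord.
have le : (k <= n)%N by rewrite -ltnS.
rewrite (eq_bigl (fun h : 'I_n.+1 => ((0 < h)%N && coprime h k) && (h <= k)%N)); last first.
  by move=> h /=; rewrite -andbA [(h <= k)%N && _]andbC andbA.
by rewrite (big_ord_narrow_cond_leq le).
Qed.

Lemma ordpF p n : ordp p (Fbar n) = \sum_(0 <= k < n.+1) A p k.
Proof.
rewrite big_mkord.
rewrite /Fbar.
rewrite (eq_bigr (fun k : 'I_n.+1 =>
   (\prod_(h < n.+1 | (0 < h)%N && (h <= k)%N && coprime h k) h)%N%:R /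
   (\prod_(h < n.+1 | (0 < h)%N && (h <= k)%N && coprime h k) k)%N%:R : rat)); last first.
  by move=> k _; rewrite prodf_div !natr_prod.
rewrite prodf_div -!natr_prod invf_div.
set N := (\prod_(k < n.+1) _)%N.
set D := (\prod_(k < n.+1) _)%N.
have hN : forall k : 'I_n.+1, (0 < \prod_(h < n.+1 | (0 < h)%N && (h <= k)%N && coprime h k) h)%N /\
    logn p (\prod_(h < n.+1 | (0 < h)%N && (h <= k)%N && coprime h k) h) =
    (\sum_(h < n.+1 | (0 < h)%N && (h <= k)%N && coprime h k) logn p h)%N.
  by move=> k; apply: logn_prod => h /andP[/andP[]].
have hD : forall k : 'I_n.+1, (0 < \prod_(h < n.+1 | (0 < h)%N && (h <= k)%N && coprime h k) k)%N /\
    logn p (\prod_(h < n.+1 | (0 < h)%N && (h <= k)%N && coprime h k) k) =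
    (\sum_(h < n.+1 | (0 < h)%N && (h <= k)%N && coprime h k) logn p k)%N.
  by move=> k; apply: logn_prod => h /andP[/andP[h0 hk] _]; apply: leq_trans hk.
have [N0 NE] := @logn_prod p _ (index_enum _) xpredT _ (fun k _ => (hN k).1).
have [D0 DE] := @logn_prod p _ (index_enum _) xpredT _ (fun k _ => (hD k).1).
rewrite ordp_div // NE DE.
rewrite -!natz !natr_sum -sumrB; apply: eq_bigr => k _.
rewrite /A -(@narrow _ k (logn p)) -(@narrow _ k (fun _ => logn p k)).
by rewrite (hD k).2 (hN k).2 !natz.
Qed.

Lemma Aform p k : A p k =
  (logn p k * \sum_(0 <= h < k.+1) (((0 < h) && coprime h k) : nat))%N%:Z -
  (\sum_(0 <= h < k.+1) ((((0 < h) && coprime h k) : nat) * logn p h))%N%:Z.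
Proof.
rewrite /A; congr (_ - _); congr Posz; rewrite big_mkcond ?big_distrr /=;
  apply: eq_bigr => h _; by case: (_ && _); rewrite ?muln0 ?muln1 ?mul0n ?mul1n.

Qed.

Lemma Aodd p k : prime p -> odd p -> (k < 3 * p)%N -> A p k =
  (((k == p) + (k == 2 * p)) * \sum_(0 <= h < k.+1) (((0 < h) && coprime h k) : nat))%N%:Z -
  (((p < k.+1) && coprime p k) + ((2 * p < k.+1) && coprime (2 * p) k))%N%:Z.
Proof.
move=> pp op k3; have p0 := prime_gt0 pp.
rewrite Aform logn_small //; congr (_ - _); congr Posz.
rewrite (eq_big_nat _ _ (F2 := fun h => ((((0 < h) && coprime h k) && (h == p) : nat)
   + (((0 < h) && coprime h k) && (h == 2 * p) : nat))%N)); last first.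
  move=> h /andP[_ hk]; rewrite logn_small //; last by lia.
  by case: (_ && _); rewrite ?mul0n ?mul1n.
rewrite big_split /= !sum_ind p0 /=.
have -> : (0 < 2 * p)%N by rewrite muln_gt0.
by [].
Qed.

Lemma A1 p k : prime p -> (k < 2 * p)%N -> A p k =
  ((k == p) * \sum_(0 <= h < k.+1) (((0 < h) && coprime h k) : nat))%N%:Z -
  ((p < k.+1) && coprime p k)%N%:Z.
Proof.
move=> pp k2; have p0 := prime_gt0 pp.
rewrite Aform logn_small1 //; congr (_ - _); congr Posz.
rewrite (eq_big_nat _ _ (F2 := fun h => ((((0 < h) && coprime h k) && (h == p) : nat))%N)); last first.
  move=> h /andP[_ hk]; rewrite logn_small1 //; last by lia.
  by case: (_ && _); rewrite ?mul0n ?mul1n.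
by rewrite sum_ind p0 /=.
Qed.

Lemma cpp p : prime p -> coprime p p = false.
Proof. by move=> pp; rewrite /coprime gcdnn; apply/eqP=> e; rewrite e in pp. Qed.

Lemma Alt p k : prime p -> (k < p)%N -> A p k = 0.
Proof.
move=> pp kp; have p0 := prime_gt0 pp.
rewrite A1 //; last by lia.
have -> : (k == p) = false by apply/eqP; lia.
have -> : (p < k.+1)%N = false by apply/negbTE; lia.
by [].
Qed.

Lemma App p : prime p -> A p p = (p.-1)%:Z.
Proof.
move=> pp; have p1 := prime_gt1 pp.
rewrite A1 //; last by lia.
by rewrite eqxx cpp // andbF mul1n cnt // totient_prime // subr0.
Qed.

Lemma Amid p k : prime p -> (p < k)%N -> (k < 2 * p)%N -> A p k = -1.
Proof.
move=> pp pk k2; have p1 := prime_gt1 pp.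
have cp : coprime p k.
  by rewrite prime_coprime // dvd_small //; [apply/negP => /or3P[] /eqP ?; lia | lia].
rewrite A1 // cp.
have -> : (k == p) = false by apply/eqP; lia.
have -> : (p < k.+1)%N = true by lia.
by [].
Qed.

Lemma A2p p : prime p -> odd p -> A p (2 * p) = (p.-1)%:Z.
Proof.
move=> pp op; have p1 := prime_gt1 pp.
rewrite Aodd //; last by lia.
have -> : (2 * p == p) = false by apply/eqP; lia.
have -> : (p < (2 * p).+1)%N = true by lia.
rewrite eqxx cnt; last by lia.
have -> : coprime (2 * p) (2 * p) = false.
  by rewrite /coprime gcdnn; apply/eqP; lia.
rewrite tot2p // prime_coprime // dvdn_mull // andbF /=.
by rewrite mul1n addn0 subr0.
Qed.

Lemma Ahi p k : prime p -> odd p -> (2 * p < k)%N -> (k < 3 * p)%N ->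
  A p k = -1 - (odd k)%:Z.
Proof.
move=> pp op pk k3; have p1 := prime_gt1 pp.
have cp : coprime p k.
  by rewrite prime_coprime // dvd_small //; apply/negP => /or3P[] /eqP ?; lia.
rewrite Aodd // coprimeMl coprime2n cp.
have -> : (k == p) = false by apply/eqP; lia.
have -> : (k == 2 * p) = false by apply/eqP; lia.
have -> : (p < k.+1)%N = true by lia.
have -> : (2 * p < k.+1)%N = true by lia.
rewrite /= andbT mul0n; lia.
Qed.

Lemma Sp p : prime p -> \sum_(0 <= k < p.+1) A p k = (p.-1)%:Z.
Proof.
move=> pp; rewrite big_nat_recr //= App // big_nat_cond big1 ?add0r //.
by move=> k /andP[/andP[_ kp] _]; exact: Alt.
Qed.

Lemma Sodd p : prime p -> odd p -> forall n, (n < 3 * p)%N ->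
  [/\ (n < p)%N -> \sum_(0 <= k < n.+1) A p k = 0,
      (p <= n)%N -> (n < 2 * p)%N -> \sum_(0 <= k < n.+1) A p k = (p.-1)%:Z - (n - p)%:Z
    & (2 * p <= n)%N -> (\sum_(0 <= k < n.+1) A p k) * 2 =
         (8 * p)%N%:Z - 3 - (3 * n)%N%:Z + (odd n.+1)%:Z].
Proof.
move=> pp op; have p1 := prime_gt1 pp.
elim=> [|n IH] hn.
  rewrite big_nat1 Alt //; last by lia.
  split=> *; lia.
case: (IH (ltnW hn)) => i1 i2 i3; clear IH.
rewrite big_nat_recr //=.
set S := (\sum_(0 <= k < n.+1) A p k) in i1 i2 i3 *.
case: (ltngtP n.+1 p) => [lt|gt|eq].
- rewrite Alt // i1; last by lia.
  clear i1 i2 i3; split=> *; [by rewrite addr0 | lia | lia].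
- case: (ltngtP n.+1 (2 * p)) => [lt2|gt2|eq2].
  + rewrite Amid // i2; try lia.
    clear i1 i2 i3; split=> *; lia.
  + rewrite Ahi //.
    have i3' := i3 ltac:(lia); clear i1 i2 i3.
    rewrite negbK; move: i3'; rewrite oddS; case: (odd n) => /= i3'; split=> // *; lia.
  + rewrite i2; try lia.
    rewrite eq2 A2p // negbK.
    have o := odd_double_half n.
    clear i1 i2 i3; split=> *; lia.
- rewrite eq App // i1; last by lia.
  clear i1 i2 i3; split=> *; lia.
Qed.

Lemma S1_7 : (\sum_(0 <= k < 8) \sum_(0 <= h < k.+1 | (0 < h)%N && coprime h k) logn 2 k)%N = 7%N.
Proof. by rewrite unlock. Qed.
Lemma S2_7 : (\sum_(0 <= k < 8) \sum_(0 <= h < k.+1 | (0 < h)%N && coprime h k) logn 2 h)%N = 8%N.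
Proof. by rewrite unlock. Qed.
Lemma sumz8 (f : nat -> nat) : \sum_(0 <= k < 8) (f k)%:Z = (\sum_(0 <= k < 8) f k)%N%:Z.
Proof. by rewrite -natz natr_sum; apply: eq_bigr => *; rewrite natz. Qed.
Lemma F7 : ordp 2 (Fbar 7) = -1.
Proof. by rewrite ordpF /A sumrB !sumz8 S1_7 S2_7. Qed.

Lemma neg_odd p : prime p -> odd p ->
  ordp p (Fbar (3 * p).-1) * 2 = 1 - p%:Z.
Proof.
move=> pp op; have p1 := prime_gt1 pp.
rewrite ordpF; have [_ _ i3] := @Sodd p pp op ((3 * p).-1) ltac:(lia).
rewrite i3; last by lia.
have o := odd_double_half ((3 * p).-1).+1.
have o2 := odd_double_half p; rewrite op in o2.
have e : ((3 * p).-1).+1 = (3 * p)%N by lia.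
rewrite e oddM op /=; lia.
Qed.

Theorem theorem4p10 :
  (forall p : nat, prime p ->
     (exists n : nat, 0 < ordp p (Fbar n)) /\ (exists n : nat, ordp p (Fbar n) < 0))
  /\ (forall p : nat, prime p -> ordp p (Fbar p) = (p.-1)%:Z /\ 0 < ordp p (Fbar p))
  /\ ordp 2 (Fbar 7) = -1
  /\ (forall p : nat, prime p -> odd p ->
        ordp p (Fbar (3 * p).-1) = - ((p.-1)./2)%:Z
        /\ (forall n : nat, (8 * p <= 3 * n)%N -> (n <= (3 * p).-1)%N ->
              ordp p (Fbar n) < 0)).
Proof.
have P2 : forall p : nat, prime p -> ordp p (Fbar p) = (p.-1)%:Z /\ 0 < ordp p (Fbar p).
  move=> p pp; have p1 := prime_gt1 pp.
  rewrite ordpF Sp //; split=> //; lia.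
split; last split; [|exact: P2|split; [exact: F7|]].
- move=> p pp; split; first by exists p; case: (P2 p pp).
  case: (boolP (odd p)) => op.
    exists (3 * p).-1; have := @neg_odd p pp op; have p1 := prime_gt1 pp; lia.
  exists 7.
  have p2 : p = 2.
    by case: (even_prime pp) => // o; rewrite o in op.
  by rewrite p2 F7.
- move=> p pp op; have p1 := prime_gt1 pp; split.
    have := @neg_odd p pp op.
    have o1 := odd_double_half p.-1; have o2 := odd_double_half p; rewrite op in o2.
    lia.
  move=> n h1 h2.
  rewrite ordpF; have [_ _ i3] := @Sodd p pp op n ltac:(lia).
  have o := odd_double_half n.+1.
  have i3' := i3 ltac:(lia); clear i3; lia.
Qed.
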